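(* Let $f:\mathbb{R}^N\to\mathbb{R}^N$ be $C^1$ with equilibrium $x_\ast$, and fix $T>0$. Suppose there exist $\lambda_\ast>0$ and $n\in\mathbb{Z}$ with $\lambda_\ast\pm\frac{2\pi n i}{T}\in\sigma(f'(x_\ast))$. Let $K\in\mathbb{R}^{N\times N}$ (with arbitrary spectrum) satisfy $f'(x_\ast)K=Kf'(x_\ast)$. Then $\det(\lambda I-f'(x_\ast)-K[1-e^{-\lambda T}])=0$ has a root with $\mathrm{Re}\,\lambda>0$; in particular $x_\ast$ is unstable as a solution of $\dot x(t)=f(x(t))+K[x(t)-x(t-T)]$.
   Context: Eigenvalues of the linearized delay equation $\dot y(t)=f'(x_\ast)y(t)+K[y(t)-y(t-T)]$ are the roots of $\lambda\mapsto\det(\lambda I-f'(x_\ast)-K[1-e^{-\lambda T}])$. *)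

(* Defs.v *)
From HB Require Import structures.
From mathcomp Require Import all_boot all_order all_algebra.
From mathcomp Require Import all_classical all_reals all_analysis.
From mathcomp Require Import complex.
Set Implicit Arguments. Unset Strict Implicit. Unset Printing Implicit Defensive.
Import Order.TTheory GRing.Theory Num.Theory.
Import numFieldNormedType.Exports.
Local Open Scope ring_scope.
Local Open Scope complex_scope.

Definition cexp (R : realType) (z : R[i]) : R[i] :=
  (expR (complex.Re z) * cos (complex.Im z)) +i* (expR (complex.Re z) * sin (complex.Im z)).

(* Standard (column-convention) Jacobian matrix f'(x) of f : R^N -> R^N.
   MathComp-Analysis' 'J f x acts on row vectors (D_v f x = v *m 'J f x),
   so the usual Jacobian is its transpose. *)
Definition jac (R : realType) (N : nat) (f : 'rV[R]_N -> 'rV[R]_N) (x : 'rV[R]_N)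
  : 'M[R]_N := (jacobian f x)^T.

Definition C1 (R : realType) (N : nat) (f : 'rV[R]_N -> 'rV[R]_N) : Prop :=
  (forall x, differentiable f x) /\ continuous (jacobian f).

Definition cmx (R : realType) (N : nat) (A : 'M[R]_N) : 'M[R[i]]_N :=
  map_mx (fun r => r%:C) A.

Definition charfun (R : realType) (N : nat) (A K : 'M[R]_N) (T : R) (l : R[i]) : R[i] :=
  \det (l%:M - cmx A - (1 - cexp (- (l * T%:C))) *: cmx K).

(* Main.v *)
Require Import Defs.
From HB Require Import structures.
From mathcomp Require Import all_boot all_order all_algebra.
From mathcomp Require Import all_classical all_reals all_analysis.
From mathcomp Require Import complex.
Import Order.TTheory GRing.Theory Num.Theory.
Local Open Scope ring_scope.
Local Open Scope complex_scope.

From mathcomp Require Import ring lra spectral.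
Set Implicit Arguments. Unset Strict Implicit. Unset Printing Implicit Defensive.
Import numFieldNormedType.Exports.
Local Close Scope complex_scope.
Local Open Scope classical_set_scope.
Local Open Scope ring_scope.
Section S.
Variable R : realType.
Implicit Types x y z : R.

Lemma cont_gt (h : R -> R) z y0 : {for z, continuous h} -> y0 < h z ->
  exists2 d : R, 0 < d & forall w, `|z - w| < d -> y0 < h w.
Proof.
move=> hc hz.
have := cvgr_gt (f := h) (h z) hc _ hz.
move=> Hn; have [d /= d0 H] := (iffLR (nbhs_ballP _ _)) (Hn _); exists d => // w zw; apply: H.
Qed.

Lemma cont_lt (h : R -> R) z y0 : {for z, continuous h} -> h z < y0 ->
  exists2 d : R, 0 < d & forall w, `|z - w| < d -> h w < y0.
Proof.
move=> hc hz.
have := cvgr_lt (f := h) (h z) hc _ hz.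
move=> Hn; have [d /= d0 H] := (iffLR (nbhs_ballP _ _)) (Hn _); exists d => // w zw; apply: H.
Qed.

Lemma first_zero (h : R -> R) a b : continuous h -> a < b -> 0 < h a -> h b < 0 ->
  exists z, [/\ a < z, z < b, h z = 0 & forall y, a <= y -> y < z -> 0 < h y].
Proof.
move=> hc ab ha hb.
pose S : set R := fun y => a <= y <= b /\ h y <= 0.
have Sb : S b by split; [rewrite (ltW ab) lexx | exact: ltW].
have lbS : lbound S a by move=> y [/andP[]].
have hlb : has_lbound S by exists a.
have neS : nonempty S by exists b.
have hinf : has_inf S by split.
set z := inf S.
have az : a <= z := lb_le_inf neS lbS.
have zle : forall y, S y -> z <= y by move=> y Sy; exact: (ge_inf hlb).
have zb : z <= b := zle _ Sb.
have pos : forall y, a <= y -> y < z -> 0 < h y.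
  move=> y ay yz; rewrite ltNge; apply/negP => hy0.
  have: z <= y by apply: zle; split => //; rewrite ay /= ltW // (lt_le_trans yz zb).
  by rewrite leNgt yz.
have hz0 : h z <= 0.
  rewrite leNgt; apply/negP => hz.
  have [d d0 H] := cont_gt (hc z) hz.
  have [y Sy yd] := inf_adherent d0 hinf.
  have zy := zle _ Sy; case: Sy => /andP[ay yb] hy.
  have : 0 < h y by apply: H; rewrite distrC ger0_norm ?subr_ge0 //; lra.
  by rewrite ltNge hy.
have hz1 : 0 <= h z.
  rewrite leNgt; apply/negP => hz.
  have [d d0 H] := cont_lt (hc z) hz.
  have az' : a < z by rewrite lt_neqAle az andbT; apply/negP => /eqP az'; move: hz; rewrite -az' ltNge ltW.
  pose y := Num.max a (z - d / 2).
  have ay : a <= y by rewrite le_max lexx.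
  have yz : y < z by rewrite gt_max az' /=; lra.
  have : h y < 0.
    apply: H; rewrite ger0_norm ?subr_ge0 ?ltW //.
    have : z - d / 2 <= y by rewrite le_max lexx orbT.
    lra.
  by rewrite ltNge ltW // pos.
have hz : h z = 0 by apply/eqP; rewrite eq_le hz0 hz1.
exists z; split => //.
- by rewrite lt_neqAle az andbT; apply/negP => /eqP e; move: ha; rewrite e hz ltxx.
- by rewrite lt_neqAle zb andbT; apply/negP => /eqP e; move: hb; rewrite -e hz ltxx.
Qed.

Lemma sin_concave x y z : 0 <= x -> x < y -> y < z -> z <= pi ->
  (sin z - sin y) * (y - x) <= (sin y - sin x) * (z - y).
Proof.
move=> x0 xy yz zpi.
have cs : forall a b : R, {within `[a, b], continuous (@sin R)}.
  by move=> a b; apply: continuous_subspaceT; exact: continuous_sin.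
have [c1 c1in e1] := MVT xy (fun t _ => is_derive_sin t) (cs x y).
have [c2 c2in e2] := MVT yz (fun t _ => is_derive_sin t) (cs y z).
move: c1in c2in; rewrite !in_itv /= => /andP[xc1 c1y] /andP[yc2 c2z].
have : cos c2 < cos c1.
  rewrite ltr_cos ?in_itv /=; try apply/andP; try split; try lra.
  all: try (apply: ltW; lra).
  all: try lra.
move=> hc; rewrite e1 e2.
have h1 : 0 < y - x by lra.
have h2 : 0 < z - y by lra.
rewrite -subr_ge0.
have -> : cos c1 * (y - x) * (z - y) - cos c2 * (z - y) * (y - x) =
  (cos c1 - cos c2) * ((y - x) * (z - y)) by ring.
apply: mulr_ge0; [lra | apply: mulr_ge0; lra].
Qed.

Lemma construct (rho c K a b : R) : 0 < rho -> c < a -> a < b -> 0 < a -> b < pi ->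
  (forall y, a <= y -> y < b -> y - c < rho * sin y) ->
  rho * sin b = b - c ->
  rho * cos b < K ->
  0 < - ln ((a - c) / (rho * sin a)) + rho * ((a - c) / (rho * sin a)) * cos a - K ->
  exists x phi, [/\ 0 < x, phi - rho * expR (- x) * sin phi = c &
                   x + rho * expR (- x) * cos phi = K].
Proof.
move=> r0 ca ab a0 bpi hlt hb hK hEa.
pose t y := (y - c) / (rho * sin y).
pose E y := - ln (t y) + rho * t y * cos y - K.
have sinpos : forall y, a <= y -> y <= b -> 0 < sin y.
  by move=> y ay yb; apply: sin_gt0_pi; apply/andP; split; lra.
have tpos : forall y, a <= y -> y <= b -> 0 < t y.
  move=> y ay yb; rewrite /t; apply: divr_gt0; first lra.
  by apply: mulr_gt0 => //; exact: sinpos.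
have tc : forall y, 0 < sin y -> {for y, continuous t}.
  move=> y sy.
  apply: continuousM.
    by apply: cvgB; [exact: cvg_id | exact: cvg_cst].
  apply: continuousV; first by rewrite /= gt_eqF // mulr_gt0.
  by apply: cvgM; [exact: cvg_cst | exact: continuous_sin].
have Ec : forall y, a <= y -> y <= b -> {for y, continuous E}.
  move=> y ay yb.
  have sy := sinpos y ay yb.
  apply: cvgB; last exact: cvg_cst.
  apply: cvgD.
    apply: cvgN.
    apply: (continuous_comp (tc y sy)).
    by apply: continuous_ln; exact: tpos.
  apply: cvgM; last exact: continuous_cos.
  by apply: cvgM; [exact: cvg_cst | exact: tc].
have tb : t b = 1.
  rewrite /t -hb divff //; rewrite gt_eqF // mulr_gt0 //; apply: sinpos; lra.
have Eb : E b < 0 by rewrite /E tb ln1 mulr1; lra.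
have Ea : 0 < E a := hEa.
have [y yin Ey] : exists2 y, y \in `[a, b] & E y = 0.
  apply: IVT; first exact: ltW.
    by apply: continuous_in_subspaceT => y; rewrite inE /= in_itv /= => /andP[? ?]; apply: Ec.
  rewrite ge_min le_max; apply/andP; split; apply/orP; [right|left]; lra.
move: yin; rewrite in_itv /= => /andP[ay yb].
have yb' : y < b by rewrite lt_neqAle yb andbT; apply/negP => /eqP e; move: Eb; rewrite -e Ey ltxx.
have ty := tpos y ay yb.
have ty1 : t y < 1.
  rewrite /t ltr_pdivrMr ?mul1r; first exact: hlt.
  by rewrite mulr_gt0 // sinpos.
exists (- ln (t y)), y; split.
- by rewrite oppr_gt0 ln_lt0 // ty ty1.
- rewrite opprK lnK ?posrE //.
  have sy : 0 < sin y by apply: sinpos.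
  have -> : rho * ((y - c) / (rho * sin y)) * sin y = y - c.
    by field; rewrite !gt_eqF.
  lra.
- rewrite opprK lnK ?posrE //.
  by move: Ey; rewrite /E; lra.
Qed.

Lemma cos_le0 x : pi / 2 <= x -> x <= pi -> cos x <= 0.
Proof.
move=> h1 h2.
have -> : x = (x - pi / 2) + pi / 2 by ring.
rewrite cosDpihalf oppr_le0; apply: sin_ge0_pi; apply/andP; split; lra.
Qed.

Lemma cos_le_mono x y : 0 <= x -> x <= y -> y <= pi -> cos y <= cos x.
Proof.
move=> x0 xy ypi; have [->|xy'] := eqVneq x y; first exact: lexx.
apply: ltW; rewrite ltr_cos ?in_itv /=; try (apply/andP; split); try lra.
Qed.

Lemma conc_neg (rho c y0 p x : R) : 0 < rho -> 0 <= y0 -> y0 < p -> p < x -> x <= pi ->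
  0 < rho * sin y0 - y0 + c -> rho * sin p - p + c = 0 -> rho * sin x - x + c < 0.
Proof.
move=> r0 y00 y0p px xpi hy0 hp.
have := sin_concave y00 y0p px xpi.
move=> hc.
have hc' : rho * ((sin x - sin p) * (p - y0)) <= rho * ((sin p - sin y0) * (x - p)).
  by rewrite ler_pM2l.
have e1 : rho * sin p = p - c by lra.
have H : (rho * sin x - x + c) * (p - y0) <= - (rho * sin y0 - y0 + c) * (x - p).
  have -> : (rho * sin x - x + c) * (p - y0) =
     rho * ((sin x - sin p) * (p - y0)) + (rho * sin p - p + c) * (p - y0) - (x - p) * (p - y0) by ring.
  have -> : - (rho * sin y0 - y0 + c) * (x - p) =
     rho * ((sin p - sin y0) * (x - p)) - (rho * sin p - p + c) * (x - p) - (p - y0) * (x - p) by ring.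
  rewrite hp !mul0r; lra.
have : - (rho * sin y0 - y0 + c) * (x - p) < 0.
  rewrite mulNr oppr_lt0; apply: mulr_gt0 => //; lra.
move=> H2.
have : (rho * sin x - x + c) * (p - y0) < 0 by lra.
rewrite pmulr_llt0 //; lra.
Qed.

Lemma root_cos2 (rho c r : R) : rho * sin r = r - c ->
  (rho * cos r) ^+ 2 = rho ^+ 2 - (r - c) ^+ 2.
Proof.
move=> e; rewrite -e; have := cos2Dsin2 r.
move=> h; have -> : rho ^+ 2 = rho ^+ 2 * (cos r ^+ 2 + sin r ^+ 2) by rewrite h mulr1.
ring.
Qed.

Lemma cos_cmp (rho c p r : R) : 0 < rho -> rho * sin p = p - c -> rho * sin r = r - c ->
  cos p <= 0 -> (p - c) ^+ 2 <= (r - c) ^+ 2 -> cos p <= cos r.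
Proof.
move=> r0 ep er cp le.
have := root_cos2 ep; have := root_cos2 er => h1 h2.
rewrite leNgt; apply/negP => lt.
have : (rho * cos p) ^+ 2 < (rho * cos r) ^+ 2.
  rewrite -subr_gt0.
  have -> : (rho * cos r) ^+ 2 - (rho * cos p) ^+ 2 =
    (rho ^+ 2) * ((cos p - cos r) * (- cos p - cos r)) by ring.
  apply: mulr_gt0; first by rewrite exprn_gt0.
  apply: mulr_gt0; lra.
rewrite h1 h2; lra.
Qed.

Lemma claim (rho c phi1 r : R) : 0 < rho -> 0 <= c -> c < phi1 -> phi1 < pi ->
  rho * sin phi1 = phi1 - c ->
  (forall y, 0 < y -> y < phi1 -> y - c < rho * sin y) ->
  rho * sin r = r - c -> cos phi1 <= cos r.
Proof.
move=> r0 c0 cp1 p1pi e1 hpos er.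
have pi0 := pi_gt0 R.
have hp : forall y, 0 < y -> y < phi1 -> 0 < rho * sin y - y + c.
  by move=> y y0 yp; have := hpos y y0 yp; lra.
have rge : 0 < r -> phi1 <= r.
  move=> r0'; rewrite leNgt; apply/negP => rp.
  by have := hp r r0' rp; lra.
have [cn|cp] := lerP (cos phi1) 0.
- have [rn|rp] := ltrP r 0; last first.
    have [->|rne] := eqVneq r 0; first by rewrite cos0 (le_trans cn).
    have r0' : 0 < r by rewrite lt_neqAle eq_sym rne rp.
    have := rge r0' => pr.
    apply: (cos_cmp r0 e1 er cn).
    rewrite -subr_ge0.
    have -> : (r - c) ^+ 2 - (phi1 - c) ^+ 2 = (r - phi1) * (r + phi1 - 2 * c) by ring.
    apply: mulr_ge0; lra.
  have [crp|crn] := lerP 0 (cos r); first exact: le_trans crp.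
  have rle : r <= - (pi / 2).
    rewrite leNgt; apply/negP => h.
    have : 0 < cos r by apply: cos_gt0_pihalf; apply/andP; split; lra.
    lra.
  have big : phi1 <= 2 * c - r.
    rewrite leNgt; apply/negP => h.
    have H := hp (2 * c - r) ltac:(lra) h.
    have csr : cos (c - r) <= 0 by apply: cos_le0; lra.
    have sc : 0 <= sin c by apply: sin_ge0_pi; apply/andP; split; lra.
    have : rho * sin (2 * c - r) - (2 * c - r) + c = 2 * rho * cos (c - r) * sin c.
      have -> : 2 * c - r = (c - r) + c by ring.
      have e2 : rho * sin (- r) = c - r by rewrite sinN mulrN er; ring.
      have e3 : - r = (c - r) - c by ring.
      rewrite e3 sinB in e2; rewrite sinD.
      lra.
    have : 0 <= rho * (- cos (c - r)) * sin c.
      apply: mulr_ge0 => //; apply: mulr_ge0; lra.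
    lra.
  apply: (cos_cmp r0 e1 er cn).
  rewrite -subr_ge0.
  have -> : (r - c) ^+ 2 - (phi1 - c) ^+ 2 = (c - r - (phi1 - c)) * (c - r + (phi1 - c)) by ring.
  apply: mulr_ge0; lra.
- have p1h : phi1 < pi / 2.
    rewrite ltNge; apply/negP => h.
    have : cos phi1 <= 0 by apply: cos_le0; lra.
    lra.
  have hneg : forall x, phi1 < x -> x <= pi -> rho * sin x - x + c < 0.
    move=> x px xpi.
    apply: (@conc_neg rho c (phi1 / 2) phi1 x) => //; try lra; apply: hp; lra.
  have rho_lt : rho < pi / 2 - c.
    have := hneg (pi / 2) p1h ltac:(lra); rewrite sin_pihalf; lra.
  have [rn|rp] := ltrP r 0; last first.
    have [->|rne] := eqVneq r 0; first by rewrite cos0 cos_le1.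
    have r0' : 0 < r by rewrite lt_neqAle eq_sym rne rp.
    have := rge r0' => pr.
    have [->|pr'] := eqVneq phi1 r; first exact: lexx.
    have pr2 : phi1 < r by rewrite lt_neqAle pr' pr.
    have [rpi|rpi] := lerP r pi.
      by have := hneg r pr2 rpi; lra.
    have : rho * sin r <= rho by rewrite ler_piMr ?sin_le1 // ltW.
    lra.
  have ep : rho * sin (- r) = - r + c by rewrite sinN mulrN er; ring.
  have srle : rho * sin (- r) <= rho by rewrite ler_piMr ?sin_le1 // ltW.
  have pl : - r <= phi1.
    rewrite leNgt; apply/negP => h.
    by have := hneg (- r) h ltac:(lra); lra.
  have -> : cos r = cos (- r) by rewrite cosN.
  apply: cos_le_mono; lra.
Qed.

Lemma sin_mvt0 (a : R) : 0 < a -> exists2 xi, 0 < xi < a & sin a = cos xi * a.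
Proof.
move=> a0.
have cs : {within `[0, a], continuous (@sin R)}.
  by apply: continuous_subspaceT; exact: continuous_sin.
have [xi xin e] := MVT a0 (fun t _ => is_derive_sin t) cs.
by exists xi; [move: xin; rewrite in_itv | move: e; rewrite sin0 !subr0].
Qed.

Lemma sin_lt_id (a : R) : 0 < a -> sin a < a.
Proof.
move=> a0; have pi0 := pi_gt0 R.
have [api|api] := lerP a pi; last first.
  have := sin_le1 a; have := pi_ge2 R; lra.
have [xi /andP[x0 xa] e] := sin_mvt0 a0.
rewrite e; have : cos xi < 1.
  rewrite -cos0 ltr_cos ?in_itv /=; try (apply/andP; split); lra.
move=> h; rewrite -[ltRHS]mul1r ltr_pM2r //.
Qed.

Lemma solve_x (C K x0 : R) : 0 <= x0 -> x0 + C * expR (- x0) <= K ->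
  (0 < x0 \/ x0 + C * expR (- x0) < K) ->
  exists2 x, 0 < x & x + C * expR (- x) = K.
Proof.
move=> x00 hle hor.
pose l x := x + C * expR (- x).
pose b := x0 + `|K| + `|C| + 1.
have lc : continuous l.
  move=> x; apply: cvgD; first exact: cvg_id.
  apply: cvgM; first exact: cvg_cst.
  apply: (continuous_comp (f := fun x => - x)); first by apply: cvgN; exact: cvg_id.
  exact: continuous_expR.
have xb : x0 <= b by rewrite /b; have := normr_ge0 K; have := normr_ge0 C; lra.
have lb : K <= l b.
  rewrite /l.
  have e1 : expR (- b) <= 1 by rewrite -expR0 ler_expR; have := normr_ge0 K; have := normr_ge0 C; rewrite /b; lra.
  have e2 : 0 < expR (- b) := expR_gt0 _.
  have : - `|C| <= C * expR (- b).
    have h3 : `|C * expR (- b)| <= `|C|.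
      by rewrite normrM (gtr0_norm e2) ler_piMr.
    have := ler_norm (- (C * expR (- b))); rewrite normrN; lra.
  have := ler_norm K; rewrite /b; lra.
have [x xin ex] : exists2 x, x \in `[x0, b] & l x = K.
  apply: IVT => //; first by apply: continuous_subspaceT.
  by rewrite ge_min le_max; apply/andP; split; apply/orP; [left|right].
move: xin; rewrite in_itv /= => /andP[x0x xb'].
exists x => //.
case: hor => h; first lra.
have ne : x != x0.
  by apply/eqP => e; move: h; rewrite -/(l x0) -e ex ltxx.
have : x0 < x by rewrite lt_neqAle eq_sym ne x0x.
lra.
Qed.

Definition goalP (rho s al : R) := exists x phi, [/\ 0 < x,
  phi - rho * expR (- x) * sin phi = rho * sin al - al &
  x + rho * expR (- x) * cos phi = s + rho * cos al].

Lemma h_cont (rho c : R) : continuous (fun y => rho * sin y - y + c).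
Proof.
move=> y; apply: cvgD; last exact: cvg_cst.
apply: cvgB; last exact: cvg_id.
by apply: cvgM; [exact: cvg_cst | exact: continuous_sin].
Qed.

Lemma sin_lb (c p a : R) : 0 <= c -> c < a -> a < p -> p <= pi ->
  Num.min (sin c) (sin p) <= sin a.
Proof.
move=> c0 ca ap ppi.
have hcv := sin_concave c0 ca ap ppi.
pose m0 := Num.min (sin c) (sin p).
have m1 : m0 <= sin c by rewrite /m0 ge_min lexx.
have m2 : m0 <= sin p by rewrite /m0 ge_min lexx orbT.
rewrite -/m0.
have H : m0 * (p - c) <= sin a * (p - c).
  have h1 : sin c * (p - a) + sin p * (a - c) <= sin a * (p - c).
    have -> : sin a * (p - c) = sin c * (p - a) + sin p * (a - c) +
      ((sin a - sin c) * (p - a) - (sin p - sin a) * (a - c)) by ring.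
    by rewrite lerDl subr_ge0.
  have h2 : m0 * (p - a) + m0 * (a - c) <= sin c * (p - a) + sin p * (a - c).
    by apply: lerD; apply: ler_wpM2r => //; rewrite subr_ge0 ltW.
  have -> : m0 * (p - c) = m0 * (p - a) + m0 * (a - c) by ring.
  exact: le_trans h2 h1.
by move: H; rewrite ler_pM2r // subr_gt0 (lt_trans ca ap).
Qed.

Lemma case_gen (rho s al : R) : 0 < rho -> 0 < s ->
  0 < rho * sin al - al < pi -> goalP rho s al.
Proof.
set c := rho * sin al - al; set K := s + rho * cos al.
move=> r0 s0 /andP[c0 cpi].
have pi0 := pi_gt0 R.
have sc : 0 < sin c by apply: sin_gt0_pi; rewrite c0 cpi.
have [p1 [cp1 p1pi hp1 hpos]] := first_zero (@h_cont rho c) cpi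
  ltac:(by rewrite /= subrK mulr_gt0) ltac:(by rewrite /= sinpi mulr0 sub0r; lra).
have e1 : rho * sin p1 = p1 - c by lra.
have hpos' : forall y, 0 < y -> y < p1 -> y - c < rho * sin y.
  move=> y y0 yp; have [yc|yc] := ltrP y c.
    have : 0 < sin y by apply: sin_gt0_pi; apply/andP; split; lra.
    move=> sy; have := mulr_gt0 r0 sy; lra.
  by have := hpos y yc yp; lra.
have cl : cos p1 <= cos al.
  have -> : cos al = cos (- al) by rewrite cosN.
  apply: (claim r0 (ltW c0) cp1 p1pi e1 hpos').
  by rewrite sinN mulrN /c; ring.
have sp1 : 0 < sin p1 by apply: sin_gt0_pi; apply/andP; split; lra.
pose m0 := Num.min (sin c) (sin p1).
have m00 : 0 < m0 by rewrite lt_min sc sp1.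
pose eps := expR (- (rho + `|K| + 1)).
have epsE : eps = expR (- (rho + `|K| + 1)) by [].
have eps0 : 0 < eps := expR_gt0 _.
have eps1 : eps <= 1 by rewrite /eps -[leRHS]expR0 ler_expR; have := normr_ge0 K; lra.
pose d := Num.min ((p1 - c) / 2) (rho * m0 * eps / 2).
have d0 : 0 < d by rewrite lt_min; apply/andP; split; [lra | apply: divr_gt0 => //; rewrite !mulr_gt0].
have d1 : d <= (p1 - c) / 2 by rewrite ge_min lexx.
have d2 : d <= rho * m0 * eps / 2 by rewrite ge_min lexx orbT.
pose a := c + d.
have ad : a = c + d by [].
have sa : m0 <= sin a.
  by apply: sin_lb; lra.
clearbody a d m0 eps.
pose t := (a - c) / (rho * sin a).
have sa0 : 0 < sin a by lra.
have t0 : 0 < t by rewrite /t divr_gt0 // ?mulr_gt0 //; lra.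
have tle : t <= eps / 2.
  rewrite /t ler_pdivrMr ?mulr_gt0 //.
  have : rho * m0 * eps / 2 <= eps / 2 * (rho * sin a).
    have -> : eps / 2 * (rho * sin a) = rho * sin a * eps / 2 by ring.
    rewrite ler_pM2r // ler_pM2r // ler_pM2l //.
  lra.
have tlt : t < eps by lra.
have lnt : - ln t > rho + `|K| + 1.
  have : ln t < ln eps by rewrite ltr_ln ?posrE.
  rewrite epsE expRK; lra.
have cosa : - 1 <= cos a := cos_geN1 a.
have Ea : 0 < - ln t + rho * t * cos a - K.
  have : - (rho * t) <= rho * t * cos a.
    have : 0 <= rho * t * (cos a + 1) by apply: mulr_ge0; [apply: mulr_ge0; apply: ltW | lra].
    rewrite mulrDr mulr1; lra.
  have : t <= 1 by lra.
  move=> t1; have : rho * t <= rho by rewrite ler_piMr // ltW.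
  have := ler_norm K; lra.
have ca : c < a by lra.
have ap : a < p1 by lra.
have a0 : 0 < a by lra.
have hl : forall y, a <= y -> y < p1 -> y - c < rho * sin y.
  by move=> y ay yp; apply: hpos' => //; lra.
have hK : rho * cos p1 < K.
  have := ler_pM2l r0 (cos p1) (cos al); rewrite cl => /esym H.
  rewrite /K; lra.
have [x [phi [x0 e2 e3]]] := @construct rho c K a p1 r0 ca ap a0 p1pi hl e1 hK Ea.
by exists x, phi; split.
Qed.
End S.


Section S2.
Variable R : realType.

Lemma case_pi (rho s al : R) : 0 < rho -> 0 < s ->
  rho * sin al - al = pi -> goalP rho s al.
Proof.
move=> r0 s0 e.
have [x x0 ex] := @solve_x R (- rho) (s + rho * cos al) 0 (lexx 0)
  ltac:(rewrite oppr0 expR0 mulr1 add0r; have := cos_geN1 al; nra)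
  ltac:(right; rewrite oppr0 expR0 mulr1 add0r; have := cos_geN1 al; nra).
exists x, pi; split => //.
  by rewrite sinpi mulr0 subr0 e.
by rewrite cospi mulrN1; move: ex; rewrite mulNr.
Qed.


Lemma case_zero_c (rho s al : R) : 1 < rho -> 0 < s -> rho * sin al - al = 0 ->
  s + rho * cos al < ln rho + 1 -> goalP rho s al.
Proof.
set K := s + rho * cos al.
move=> r1 s0 e hK0.
have r0 : 0 < rho by lra.
have pi0 := pi_gt0 R.
pose del := ln rho + 1 - K.
have del0 : 0 < del by rewrite /del; lra.
pose ir := rho^-1.
have irr : rho * ir = 1 by rewrite /ir divff // gt_eqF.
have ir0 : 0 < ir by rewrite /ir invr_gt0.
have ir1 : ir < 1 by nra.
pose mu := Num.min (del / 8) (Num.min (1/4) ((1 - ir) / 2)).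
have mu0 : 0 < mu by rewrite /mu !lt_min; apply/andP; split; [|apply/andP; split]; lra.
have mu1 : mu <= del / 8 by rewrite /mu ge_min lexx.
have mu2 : mu <= 1 / 4 by rewrite /mu !ge_min lexx orbT.
have mu3 : mu <= (1 - ir) / 2 by rewrite /mu !ge_min lexx !orbT.
clearbody mu.
pose g := 1 - mu.
have gE : g = 1 - mu by [].
clearbody g.
have g0 : 0 < g by lra.
have g1 : g < 1 by lra.
have rg : 1 < rho * g.
  have : ir < g by lra.
  move=> h; have := ltr_pM2l r0 ir g; rewrite h irr => /esym; lra.
have lng : 1 - g^-1 <= ln g.
  have h := @le_ln1Dx R (g^-1 - 1) ltac:(have : 0 < g^-1 by rewrite invr_gt0; lra).
  move: h; have -> : 1 + (g^-1 - 1) = g^-1 by ring.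
  rewrite lnV ?posrE //; lra.
have ginv : g^-1 <= 1 + 2 * mu.
  rewrite -[g^-1]mul1r ler_pdivrMr // gE.
  have -> : (1 + 2 * mu) * (1 - mu) = 1 + mu * (1 - 2 * mu) by ring.
  rewrite lerDl; apply: mulr_ge0; lra.
have key : K < ln rho + ln g + g by rewrite /del in mu1; lra.
pose a := acos g.
have ca : cos a = g by rewrite /a acosK // in_itv /=; apply/andP; split; lra.
have a0 : 0 < a by rewrite /a acos_gt0 //; apply/andP; split; lra.
have api : a <= pi by rewrite /a acos_lepi //; apply/andP; split; lra.
have apih : a < pi / 2.
  rewrite ltNge; apply/negP => h; have := cos_le0 h api; lra.
clearbody a.
have [xi /andP[xi0 xia] exi] := sin_mvt0 a0.
have cxi1 : cos xi <= 1 := cos_le1 xi.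
have cxi2 : g <= cos xi by rewrite -ca; apply: cos_le_mono; lra.
have sa1 : sin a <= a by rewrite exi; rewrite -[leRHS]mul1r ler_pM2r.
have sa2 : a * g <= sin a by rewrite exi mulrC ler_pM2r.
have sa0 : 0 < sin a by have := mulr_gt0 a0 g0; lra.
have ha : a < rho * sin a.
  have : rho * (a * g) <= rho * sin a by rewrite ler_pM2l.
  have : a < rho * (a * g) by rewrite mulrCA -[ltLHS]mulr1 ltr_pM2l.
  lra.
have hsmall : forall y, 0 < y -> y < a -> y < rho * sin y.
  move=> y y0 ya.
  have hc := sin_concave (lexx 0) y0 ya api.
  rewrite sin0 !subr0 in hc.
  have h1 : sin a * y <= sin y * a.
    by rewrite mulrBl mulrBr in hc; lra.
  have h2 : a * y < rho * sin a * y by rewrite ltr_pM2r.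
  have h3 : rho * sin a * y <= rho * sin y * a.
    by rewrite -mulrA -[X in _ <= X]mulrA ler_pM2l.
  have : y * a < (rho * sin y) * a by lra.
  by rewrite ltr_pM2r.
have [p1 [ap1 p1pi hp1 hpos]] := first_zero (@h_cont R rho 0) (ltac:(lra) : a < pi)
  ltac:(rewrite /= addr0; lra) ltac:(by rewrite /= sinpi mulr0 sub0r addr0; lra).
have e1 : rho * sin p1 = p1 - 0 by lra.
have hpos' : forall y, 0 < y -> y < p1 -> y - 0 < rho * sin y.
  move=> y y0 yp; rewrite subr0; have [ya|ya] := ltrP y a; first exact: hsmall.
  by have := hpos y ya yp; lra.
have cl : cos p1 <= cos al.
  have -> : cos al = cos (- al) by rewrite cosN.
  apply: (claim r0 (lexx 0) (ltac:(lra) : 0 < p1) p1pi e1 hpos').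
  by rewrite sinN mulrN; lra.
have hK : rho * cos p1 < K.
  have := ler_pM2l r0 (cos p1) (cos al); rewrite cl => /esym H.
  rewrite /K; lra.
pose u := a / sin a.
have u1 : 1 <= u by rewrite /u ler_pdivlMr // mul1r.
have u2 : u <= g^-1.
  rewrite /u ler_pdivrMr //.
  have H : g^-1 * (a * g) <= g^-1 * sin a by rewrite ler_pM2l ?invr_gt0.
  have E1 : g^-1 * (a * g) = a by field; rewrite gt_eqF.
  by rewrite E1 in H.
have u0 : 0 < u by lra.
have lnu : ln u <= - ln g.
  rewrite -lnV ?posrE // ler_ln ?posrE //; rewrite invr_gt0 //.
have Ea : 0 < - ln ((a - 0) / (rho * sin a)) + rho * ((a - 0) / (rho * sin a)) * cos a - K.
  have -> : (a - 0) / (rho * sin a) = u / rho.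
    by rewrite /u subr0; field; rewrite !gt_eqF.
  have -> : rho * (u / rho) = u by field; rewrite gt_eqF.
  rewrite ln_div ?posrE // ca.
  have : g <= u * g by rewrite -[leLHS]mul1r ler_pM2r.
  lra.
have [x [phi [x0 e2 e3]]] := @construct R rho 0 K a p1 r0 a0 ap1 a0 p1pi
  (fun y ay yp => hpos' y ltac:(lra) yp) e1 hK Ea.
by exists x, phi; split => //; rewrite e2 e.
Qed.

End S2.


Section S3.
Variable R : realType.

Lemma case_zero (rho s al : R) : 0 < rho -> 0 < s ->
  rho * sin al - al = 0 -> goalP rho s al.
Proof.
set K := s + rho * cos al.
move=> r0 s0 e.
have [rK|Kr] := ltrP rho K.
  have [x x0 ex] := @solve_x R rho K 0 (lexx 0)
    ltac:(rewrite oppr0 expR0 mulr1 add0r; lra)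
    ltac:(right; rewrite oppr0 expR0 mulr1 add0r; lra).
  by exists x, 0; split; rewrite ?sin0 ?cos0 ?mulr0 ?mulr1 ?subr0 ?e.
have r1 : 1 < rho.
  rewrite ltNge; apply/negP => r1.
  have al0 : al = 0.
    have [alp|aln] := ltrP 0 al.
      have sp : 0 < sin al.
        have h : 0 < rho * sin al by lra.
        by rewrite pmulr_rgt0 in h.
      have : rho * sin al <= sin al by rewrite ler_piMl // ltW.
      have := sin_lt_id alp; lra.
    have [aln'|al0] := ltrP al 0; last by apply/eqP; rewrite eq_le aln al0.
    have alp : 0 < - al by lra.
    have e' : rho * sin (- al) = - al by rewrite sinN mulrN; lra.
    have sp : 0 < sin (- al).
      have h : 0 < rho * sin (- al) by lra.
      by rewrite pmulr_rgt0 in h.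
    have : rho * sin (- al) <= sin (- al) by rewrite ler_piMl // ltW.
    have := sin_lt_id alp; lra.
  by move: Kr; rewrite /K al0 cos0 mulr1; lra.
have [lK|Kl] := lerP (ln rho + 1) K.
  have lr0 : 0 < ln rho by rewrite ln_gt0.
  have ee : ln rho + rho * expR (- ln rho) = ln rho + 1.
    by rewrite expRN lnK ?posrE // divff // gt_eqF.
  have [x x0 ex] := @solve_x R rho K (ln rho) (ltW lr0)
    ltac:(rewrite ee; lra) ltac:(left; lra).
  by exists x, 0; split; rewrite ?sin0 ?cos0 ?mulr0 ?mulr1 ?subr0 ?e.
exact: case_zero_c.
Qed.

Lemma main_norm (rho s al : R) : 0 < rho -> 0 < s ->
  0 <= rho * sin al - al <= pi -> goalP rho s al.
Proof.
move=> r0 s0 /andP[c0 cpi].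
have [e|ne] := eqVneq (rho * sin al - al) 0; first exact: case_zero.
have [e|ne'] := eqVneq (rho * sin al - al) pi; first exact: case_pi.
apply: case_gen => //; apply/andP; split.
  by rewrite lt_neqAle eq_sym ne c0.
by rewrite lt_neqAle ne' cpi.
Qed.


Lemma per_int (f : R -> R) (x : R) (k : int) : periodic f (pi *+ 2) ->
  f (x + 2 * pi * k%:~R) = f x.
Proof.
move=> pf.
case: k => n.
  have -> : 2 * (pi : R) * (Posz n)%:~R = pi *+ 2 *+ n.
    rewrite -mulrnA -[RHS]mulr_natr natrM.
    change ((Posz n)%:~R) with (n%:R : R); ring.
  exact: periodicn.
have -> : 2 * (pi : R) * (Negz n)%:~R = - (pi *+ 2 *+ n.+1).
  rewrite NegzE mulrNz -mulrnA -[in RHS]mulr_natr natrM.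
  change ((Posz n.+1)%:~R) with (n.+1%:R : R); ring.
have := periodicn pf n.+1 (x - pi *+ 2 *+ n.+1).
by rewrite subrK => ->.
Qed.

Lemma goal_any (rho s al : R) : 0 < rho -> 0 < s -> goalP rho s al.
Proof.
move=> r0 s0.
set c := rho * sin al - al.
have pi0 := pi_gt0 R.
have p2 : 0 < 2 * (pi : R) by lra.
pose k := Num.floor ((c + pi) / (2 * pi)).
have k1 : k%:~R <= (c + pi) / (2 * pi) by apply: real_floor_le; exact: num_real.
have k2 : (c + pi) / (2 * pi) < (k + 1)%:~R by apply: real_floorD1_gt; exact: num_real.
rewrite intrD in k2.
have k1' : 2 * pi * k%:~R <= c + pi.
  by rewrite mulrC -ler_pdivlMr.
have k2' : c + pi < 2 * pi * (k%:~R + 1).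
  by rewrite mulrC -ltr_pdivrMr.
clearbody k.
pose K : R := 2 * pi * k%:~R.
have KE : K = 2 * pi * k%:~R by [].
clearbody K.
have sP : forall x, sin (x + K) = sin x by move=> x; rewrite KE; apply: per_int; exact: sinD2pi.
have cP : forall x, cos (x + K) = cos x by move=> x; rewrite KE; apply: per_int; exact: cosD2pi.
have [cn|cp] := ltrP (c - K) 0.
  have hc : 0 <= rho * sin (- (al + K)) - (- (al + K)) <= pi.
    rewrite sinN sP; apply/andP; split; rewrite /c in cn k1' k2' *; lra.
  have [x [phi [x0 e1 e2]]] := main_norm r0 s0 hc.
  exists x, (- phi + K); split => //.
    by rewrite sP sinN; move: e1; rewrite sinN sP /c; lra.
  by rewrite cP cosN; move: e2; rewrite cosN cP.
have hc : 0 <= rho * sin (al + K) - (al + K) <= pi.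
  rewrite sP; apply/andP; split; rewrite /c in cp k1' k2' *; lra.
have [x [phi [x0 e1 e2]]] := main_norm r0 s0 hc.
exists x, (phi + K); split => //.
  by rewrite sP; move: e1; rewrite sP /c; lra.
by rewrite cP; move: e2; rewrite cP.
Qed.

End S3.


Lemma common_ev (C : numClosedFieldType) n (A B : 'M[C]_n) a :
  A *m B = B *m A -> eigenvalue A a ->
  exists v : 'rV_n, exists mu, [/\ v != 0, v *m A = a *: v & v *m B = mu *: v].
Proof.
move=> AB ea.
pose V := eigenspace A a.
have sVB : stablemx V B by apply: comm_mx_stable_eigenspace.
pose W := row_base V.
have sWB : stablemx W B by rewrite stablemx_row_base.
have rV : (0 < \rank V)%N by rewrite lt0n mxrank_eq0.
have [mu emu] := eigenvalue_closed (conjmx W B) rV.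
have /eigenvalueP [w wB wnz] := emu.
exists (w *m W), mu; split.
- by rewrite mulmx_free_eq0 ?row_base_free.
- apply/eigenspaceP; apply: mulmx_sub; rewrite /W eq_row_base; exact: submx_refl.
- have e : W *m B = conjmx W B *m W by rewrite /conjmx mulmxKpV.
  by rewrite -mulmxA e mulmxA wB scalemxAl.
Qed.

Section S4.
Variable R : realType.

Lemma polar (a b : R) : (a != 0) || (b != 0) ->
  exists rho al, [/\ 0 < rho, a = rho * cos al & b = rho * sin al].
Proof.
move=> nz.
pose rho := Num.sqrt (a ^+ 2 + b ^+ 2).
have q0 : 0 < a ^+ 2 + b ^+ 2.
  case/orP: nz => h.
    have : 0 < a ^+ 2 by rewrite expr2; have [h'|h'|h'] := ltrgtP a 0; [nra|nra|by move: h; rewrite h' eqxx].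
    have := sqr_ge0 b; lra.
  have : 0 < b ^+ 2 by rewrite expr2; have [h'|h'|h'] := ltrgtP b 0; [nra|nra|by move: h; rewrite h' eqxx].
  have := sqr_ge0 a; lra.
have r0 : 0 < rho by rewrite sqrtr_gt0.
have r2 : rho ^+ 2 = a ^+ 2 + b ^+ 2 by rewrite sqr_sqrtr // ltW.
clearbody rho.
have ab : -1 <= a / rho <= 1.
  rewrite ler_pdivrMr // ler_pdivlMr // mul1r mulN1r.
  have := sqr_ge0 b; rewrite !expr2 in r2 *.
  by move=> hb; apply/andP; split; nra.
pose al0 := acos (a / rho).
have c0 : cos al0 = a / rho by rewrite /al0 acosK // in_itv /=.
have s0 : rho * sin al0 = `|b|.
  rewrite /al0 sin_acos //.
  have -> : 1 - (a / rho) ^+ 2 = (b / rho) ^+ 2.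
    by apply/eqP; rewrite -subr_eq0; apply/eqP; field: r2 => //; rewrite gt_eqF.
  have ir : 0 < rho^-1 by rewrite invr_gt0.
  rewrite sqrtr_sqr normrM (gtr0_norm ir).
  by field; rewrite gt_eqF.
have ca : a = rho * cos al0 by rewrite c0; field; rewrite gt_eqF.
have [bp|bn] := lerP 0 b.
  by exists rho, al0; split => //; rewrite s0 ger0_norm.
exists rho, (- al0); split => //; first by rewrite cosN.
by rewrite sinN mulrN s0 ltr0_norm // opprK.
Qed.
End S4.

Local Open Scope complex_scope.

Section S5.
Variable R : realType.

Lemma scalar_root (T lams : R) (n : int) (mu : R[i]) : 0 < T -> 0 < lams ->
  exists l : R[i], 0 < complex.Re l /\
    l - (lams +i* (2 * pi * n%:~R / T)) - (1 - cexp (- (l * T%:C))) * mu = 0.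
Proof.
move=> T0 l0.
have Tn : T != 0 by rewrite gt_eqF.
case: mu => mr mi.
have [/andP[/eqP mr0 /eqP mi0]|nz] := boolP ((mr == 0) && (mi == 0)).
  exists (lams +i* (2 * pi * n%:~R / T)); split => //.
  by rewrite mr0 mi0 subrr sub0r complexr0 mulr0 oppr0.
have nz' : (mr * T != 0) || (mi * T != 0).
  by move: nz; rewrite negb_and !mulf_eq0 (negbTE Tn) !orbF.
have [rho [al [r0 ea eb]]] := polar nz'.
have [x [phi [x0 e1 e2]]] := goal_any al r0 (mulr_gt0 l0 T0).
pose th := phi + al.
exists ((x / T) +i* (2 * pi * n%:~R / T + th / T)); split.
  by rewrite /= divr_gt0.
have lT : - (((x / T) +i* (2 * pi * n%:~R / T + th / T)) * T%:C) =
    (- x) +i* (- (th + 2 * pi * n%:~R)).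
  apply/eqP; rewrite eq_complex /=; apply/andP; split; apply/eqP; field => //.
rewrite lT /cexp /= cosN sinN (per_int _ _ (@cosD2pi R)) (per_int _ _ (@sinD2pi R)).
have cphi : cos phi = cos th * cos al + sin th * sin al.
  by rewrite -cosB /th addrK.
have sphi : sin phi = sin th * cos al - cos th * sin al.
  by rewrite -sinB /th addrK.
rewrite cphi in e2; rewrite sphi in e1.
have mrE : mr = rho * cos al / T by rewrite -ea; field.
have miE : mi = rho * sin al / T by rewrite -eb; field.
apply/eqP; rewrite eq_complex /=; apply/andP; split; apply/eqP.
  have -> : x / T - lams -
    ((1 - expR (- x) * cos th) * mr - (0 - expR (- x) * - sin th) * mi) =
    (x + rho * expR (- x) * (cos th * cos al + sin th * sin al) - (lams * T + rho * cos al)) / T.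
    by rewrite mrE miE; field.
  by rewrite e2 subrr mul0r.
have -> : 2 * pi * n%:~R / T + th / T - 2 * pi * n%:~R / T -
  ((1 - expR (- x) * cos th) * mi + (0 - expR (- x) * - sin th) * mr) =
  (phi - rho * expR (- x) * (sin th * cos al - cos th * sin al) - (rho * sin al - al)) / T.
  by rewrite mrE miE /th; field.
by rewrite e1 subrr mul0r.
Qed.
End S5.

Local Close Scope classical_set_scope.
Local Open Scope ring_scope.
Local Open Scope complex_scope.
Unset Implicit Arguments.
Theorem corollary5 (R : realType) (N : nat) (f : 'rV[R]_N -> 'rV[R]_N)
  (xs : 'rV[R]_N) (T : R) (lams : R) (n : int) (K : 'M[R]_N) :
  C1 f -> f xs = 0 -> 0 < T -> 0 < lams ->
  eigenvalue (cmx (jac f xs)) (lams +i* (2 * pi * n%:~R / T)) ->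
  eigenvalue (cmx (jac f xs)) (lams +i* (- (2 * pi * n%:~R / T))) ->
  jac f xs *m K = K *m jac f xs ->
  exists l : R[i], 0 < complex.Re l /\ charfun (jac f xs) K T l = 0.
Proof.
move=> _ _ T0 l0 eig _ comm.
have cm : cmx (jac f xs) *m cmx K = cmx K *m cmx (jac f xs).
  by rewrite /cmx -!map_mxM comm.
have [v [mu [vnz vA vK]]] := common_ev cm eig.
have [l [lp el]] := scalar_root n mu T0 l0.
exists l; split => //.
rewrite /charfun; apply/eqP/det0P; exists v => //.
rewrite !mulmxBr mul_mx_scalar vA -scalemxAr vK scalerA -!scalerBl.
by rewrite el scale0r.
Qed.
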